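(* Let $n\ge 4$ and let $D_n$ be the tree obtained from the path on $n-1$ vertices by adding a pendant edge at the second vertex of the path. Then the number of main eigenvalues of $D_n$ is $n-1$ if $4\nmid n$, and $n-2$ if $4\mid n$.
   Context: An eigenvalue of a graph with adjacency matrix $A$ is called main if $A$ has an eigenvector for it that is not orthogonal to the all-ones vector. *)

(* Defs.v *)
From HB Require Import structures.
From mathcomp Require Import all_boot all_order all_algebra.
From mathcomp Require Import reals.
Set Implicit Arguments. Unset Strict Implicit. Unset Printing Implicit Defensive.
Import Order.TTheory GRing.Theory Num.Theory.
Local Open Scope ring_scope.

(* Vertices of D_n are 0, 1, ..., n-1.  The path on n-1 vertices is
   0 - 1 - ... - (n-2); the pendant vertex n-1 is attached to vertex 1
   (the second vertex of the path). *)
Definition Dn_edge (n : nat) (i j : 'I_n) : bool :=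
  [&& ((i.+1 == j) || (j.+1 == i)), (i < n.-1)%N & (j < n.-1)%N]
  || ((i == 1%N :> nat) && (j == n.-1 :> nat))
  || ((j == 1%N :> nat) && (i == n.-1 :> nat)).

Definition Dn_adj (R : realType) (n : nat) : 'M[R]_n :=
  \matrix_(i, j) (Dn_edge i j)%:R.

Definition main_eigenvalue (R : realType) (n : nat) (A : 'M[R]_n) (l : R) : Prop :=
  exists v : 'cV[R]_n, [/\ v != 0, A *m v = l *: v & \sum_i v i 0 != 0].

(* Main.v *)
Set Warnings "-notation-overridden,-ambiguous-paths,-notation-incompatible-prefix".
Require Import Defs.
From HB Require Import structures.
From mathcomp Require Import all_boot all_order all_algebra.
From mathcomp Require Import reals zify ring lra.
From mathcomp Require Import trigo.
Import Order.TTheory GRing.Theory Num.Theory.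
Local Open Scope ring_scope.
Lemma edge_dec (m : nat) (hm : (3 <= m)%N) (i j : 'I_m.+1) :
  nat_of_bool (Dn_edge i j) = ((((0 < i)%N && (i < m)%N) && (j == i.-1 :> nat)) +
    [&& (i.+1 < m)%N & (j == i.+1 :> nat)] + [&& (i == 1%N :> nat) & (j == m :> nat)]
    + [&& (i == m :> nat) & (j == 1%N :> nat)])%N.
Proof. case: i j => i hi [j hj] /=; rewrite /Dn_edge /=; lia. Qed.

Lemma edge_sym n (i j : 'I_n) : Dn_edge i j = Dn_edge j i.
Proof. rewrite /Dn_edge; lia. Qed.

Section Adj.
Variable R : realType.
Variable m : nat.
Hypothesis hm : (3 <= m)%N.

Definition vec (g : nat -> R) : 'cV[R]_m.+1 := \col_(k < m.+1) g k.

Lemma sum_ind (g : nat -> R) (b : bool) (k : nat) : (b -> k < m.+1)%N ->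
  \sum_(j < m.+1) ((b && (j == k :> nat))%:R * g j) = if b then g k else 0.
Proof.
case: b => hk; last by rewrite big1 // => j _; rewrite mul0r.
have {}hk := hk isT.
rewrite (bigD1 (Ordinal hk)) //= eqxx mul1r big1 ?addr0 // => j hj.
have -> : (j == k :> nat) = false by apply/negbTE; move: hj; apply: contra => /eqP e; apply/eqP/val_inj.
by rewrite mul0r.
Qed.

Definition nb (g : nat -> R) (i : nat) : R :=
  if (i < m)%N then (if (0 < i)%N then g i.-1 else 0) + (if (i.+1 < m)%N then g i.+1 else 0)
     + (if i == 1%N then g m else 0) else g 1%N.

Lemma Aeq (g : nat -> R) (i : 'I_m.+1) : (Dn_adj R m.+1 *m vec g) i 0 = nb g i.
Proof.
rewrite mxE.
under eq_bigr do rewrite !mxE edge_dec // !natrD !mulrDl.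
rewrite !big_split /= !sum_ind; try lia.
rewrite /nb; case: i => i hi /=.
case: (ltnP i m) => him /=.
  have -> : (i == m) = false by lia.
  by rewrite andbT addr0.
have -> : i = m by lia.
rewrite andbF /=; have -> : (m.+1 < m)%N = false by lia.
have -> : (m == 1%N) = false by lia.
by rewrite eqxx !add0r.
Qed.

Lemma nb_mid g i : (1 < i)%N -> (i.+1 < m)%N -> nb g i = g i.-1 + g i.+1.
Proof.
move=> h1 h2; rewrite /nb.
have -> : (i < m)%N by lia.
have -> : (0 < i)%N by lia.
rewrite h2; have -> : (i == 1%N) = false by lia.
by rewrite addr0.
Qed.

Lemma nb_end g : nb g m.-1 = g m.-2.
Proof.
rewrite /nb; have -> : (m.-1 < m)%N by lia.
have -> : (0 < m.-1)%N by lia.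
have -> : (m.-1.+1 < m)%N = false by lia.
have -> : (m.-1 == 1%N) = false by lia.
by rewrite !addr0; congr g; lia.
Qed.

Lemma nb_one g : nb g 1 = g 0%N + g 2%N + g m.
Proof.
rewrite /nb; have -> : (1 < m)%N by lia.
by have -> : (2 < m)%N by lia.
Qed.

Lemma nb_zero g : nb g 0 = g 1%N.
Proof.
rewrite /nb; have -> : (0 < m)%N by lia.
have -> : (1 < m)%N by lia.
by rewrite add0r addr0.
Qed.

Lemma nb_m g : nb g m = g 1%N.
Proof. by rewrite /nb ltnn. Qed.

Fixpoint U (k : nat) : {poly R} :=
  match k with
  | 0 => 1
  | 1 => 'X
  | (k'.+1 as k1).+1 => 'X * U k1 - U k'
  end.

Lemma U_prop k0 : size (U k0) = k0.+1 /\ lead_coef (U k0) = 1.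
Proof.
suff H : forall k, (size (U k) = k.+1 /\ lead_coef (U k) = 1) /\
                   (size (U k.+1) = k.+2 /\ lead_coef (U k.+1) = 1) by case: (H k0).
elim.
  by rewrite /= size_polyX lead_coefX size_poly1 lead_coef1.
move=> k [[s0 l0] [s1 l1]]; split=> //.
rewrite [U k.+2]/= -/(U k.+1) [_ * U k.+1]mulrC.
have nz : U k.+1 != 0 by rewrite -size_poly_eq0 s1.
have ss : size (U k.+1 * 'X) = k.+3 by rewrite size_mulX // s1.
have lt : (size (- U k)%R < size (U k.+1 * 'X)%R)%N by rewrite size_polyN ss s0.
by rewrite size_polyDl // lead_coefDl // lead_coefMX.
Qed.


Section Rec.
Variable l : R.
Variable g : nat -> R.
Hypothesis Hg : forall i, (i <= m)%N -> nb g i = l * g i.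

Lemma rec2 k : (k.+1 <= m.-2)%N ->
  g (m.-1 - k) = (U k).[l] * g m.-1 /\ g (m.-1 - k.+1) = (U k.+1).[l] * g m.-1.
Proof.
elim: k => [|k IH] hk.
  rewrite subn0 /= hornerC mul1r hornerX; split=> //.
  have e := Hg (m.-1) (leq_pred m); rewrite nb_end in e.
  by rewrite -e; congr g; lia.
have [h1 h2] := IH (ltnW hk); split=> //.
have e := Hg (m.-1 - k.+1) (leq_trans (leq_subr _ _) (leq_pred m)).
rewrite nb_mid in e; try lia.
have -> : (m.-1 - k.+2)%N = (m.-1 - k.+1).-1 by lia.
have e2 : g (m.-1 - k.+1).+1 = g (m.-1 - k) by congr g; lia.
rewrite [U k.+2]/= -/(U k.+1) hornerD hornerN hornerM hornerX.
apply/eqP; rewrite -(subr_eq0); apply/eqP.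
have : g (m.-1 - k.+1).-1 = l * g (m.-1 - k.+1) - g (m.-1 - k.+1).+1.
  by rewrite -e addrK.
move=> ->; rewrite e2 h1 h2; ring.
Qed.

Lemma rec_formula k : (k <= m.-2)%N -> g (m.-1 - k) = (U k).[l] * g m.-1.
Proof.
case: k => [|k] hk; first by rewrite subn0 /= hornerC mul1r.
by case: (@rec2 k hk).
Qed.

End Rec.

Definition Q : {poly R} := ('X^2 - 2%:P) * U m.-2 - 'X * U (m - 3)%N.

Lemma size_Q : size Q = m.+1.
Proof.
have [s2 l2] := U_prop m.-2; have [s3 l3] := U_prop (m - 3)%N.
have mX : 'X^2 - 2%:P \is @monic R by apply: monicXnsubC.
have nz : U m.-2 != 0 by rewrite -size_poly_eq0 s2.
have sa : size (('X^2 - 2%:P) * U m.-2) = m.+1.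
  by rewrite size_monicM // s2 size_XnsubC //; lia.
have sb : size ('X * U (m - 3)%N) = m.-1.
  rewrite mulrC size_mulX ?s3; first lia.
  by rewrite -size_poly_eq0 s3.
rewrite size_polyDl sa // size_polyN sb; lia.
Qed.

Lemma Q_neq0 : Q != 0.
Proof. by rewrite -size_poly_eq0 size_Q. Qed.


Lemma Q_root l g : (forall i, (i <= m)%N -> nb g i = l * g i) -> g m.-1 != 0 -> Q.[l] = 0.
Proof.
move=> Hg hz.
have e1 := Hg 1%N (ltnW (ltnW hm)); rewrite nb_one in e1.
have e0 := Hg 0%N (leq0n _); rewrite nb_zero in e0.
have em := Hg m (leqnn _); rewrite nb_m in em.
have g1 : g 1%N = (U m.-2).[l] * g m.-1.
  rewrite -(@rec_formula _ _ Hg) //; congr g; lia.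
have g2 : g 2%N = (U (m - 3)%N).[l] * g m.-1.
  rewrite -(@rec_formula _ _ Hg) //; [congr g|]; lia.
apply: (mulIf hz); rewrite mul0r /Q !hornerE.
have : l * (g 0%N + g 2%N + g m) = l * (l * g 1%N) by rewrite e1.
rewrite !mulrDr -e0 -em g1 g2 => h.
rewrite expr2; lra.
Qed.

Lemma zero_tail l g : (forall i, (i <= m)%N -> nb g i = l * g i) -> g m.-1 = 0 -> l != 0 ->
  forall i, (i <= m)%N -> g i = 0.
Proof.
move=> Hg hz hl.
have mid : forall i, (0 < i)%N -> (i < m)%N -> g i = 0.
  move=> i h1 h2; have -> : i = (m.-1 - (m.-1 - i))%N by lia.
  by rewrite (@rec_formula _ _ Hg) // ?hz ?mulr0 //; lia.
have e0 := Hg 0%N (leq0n _); rewrite nb_zero mid // in e0; last lia.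
have em := Hg m (leqnn _); rewrite nb_m mid // in em; last lia.
move=> i hi; case: (ltnP 0 i) => h0.
  case: (ltnP i m) => h1; first exact: mid.
  have -> : i = m by lia.
  by apply/eqP; move: em => /esym/eqP; rewrite mulf_eq0 (negbTE hl).
have -> : i = 0%N by lia.
by apply/eqP; move: e0 => /esym/eqP; rewrite mulf_eq0 (negbTE hl).
Qed.

Definition gof (v : 'cV[R]_m.+1) (k : nat) : R := v (inord k) 0.

Lemma vec_gof v : vec (gof v) = v.
Proof. by apply/matrixP => i j; rewrite !mxE ord1 /gof inord_val. Qed.

Lemma eig_nb (v : 'cV[R]_m.+1) l : Dn_adj R m.+1 *m v = l *: v ->
  forall i, (i <= m)%N -> nb (gof v) i = l * gof v i.
Proof.
move=> H i hi.
have := Aeq (gof v) (inord i); rewrite vec_gof H mxE inordK //. 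
Qed.


Definition bw (c x : nat) : bool := (((x + c) %% 4 == 1) || ((x + c) %% 4 == 2))%N.
Definition cw : nat := (m %% 4 == 2)%N.
Definition w (x : nat) : R := if x == m then 0 else (bw cw x)%:R.

Lemma bw2 x : (bw cw x + bw cw (x + 2))%N = 1%N.
Proof. rewrite /bw /cw; lia. Qed.

Lemma bw1 : bw cw 1.
Proof. rewrite /bw /cw; lia. Qed.

Lemma bwm : (m %% 4 != 1)%N -> bw cw (m - 2).
Proof. move=> h; rewrite /bw /cw; lia. Qed.

Lemma nb_w : (m %% 4 != 1)%N -> forall i, (i <= m)%N -> nb w i = 1.
Proof.
move=> h4 i hi.
have wE x : x != m -> w x = (bw cw x)%:R by move=> hx; rewrite /w (negbTE hx).
case: (ltnP 0 i) => h0; last first.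
  have -> : i = 0%N by lia.
  by rewrite nb_zero wE ?bw1 //; lia.
case: (ltnP i m) => h1; last first.
  have -> : i = m by lia.
  by rewrite nb_m wE ?bw1 //; lia.
case: (ltnP 1 i) => h2; last first.
  have -> : i = 1%N by lia.
  rewrite nb_one (wE 0%N) ?(wE 2%N) ?/w ?eqxx ?addr0 -?natrD; try lia.
  by rewrite (bw2 0).
case: (ltnP i.+1 m) => h3.
  rewrite nb_mid // !wE; try lia.
  have -> : i.+1 = (i.-1 + 2)%N by lia.
  by rewrite -natrD bw2.
have -> : i = m.-1 by lia.
rewrite nb_end wE; last lia.
have -> : m.-2 = (m - 2)%N by lia.
by rewrite bwm.
Qed.

Lemma adj_sym : (Dn_adj R m.+1)^T = Dn_adj R m.+1.
Proof. by apply/matrixP => i j; rewrite !mxE edge_sym. Qed.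

Lemma zero_not_main (v : 'cV[R]_m.+1) : (m %% 4 != 1)%N ->
  Dn_adj R m.+1 *m v = 0 -> \sum_i v i 0 = 0.
Proof.
move=> h4 Hv.
set J := Dn_adj R m.+1 *m vec w.
have HJ : forall i, J i 0 = 1.
  by move=> i; rewrite /J Aeq nb_w //; rewrite -ltnS.
have : ((J^T *m v) 0 0 = 0).
  by rewrite /J trmx_mul adj_sym -mulmxA Hv mulmx0 mxE.
rewrite mxE => h; rewrite -[RHS]h; apply: eq_bigr => i _.
by rewrite mxE HJ mul1r.
Qed.


Lemma trig_half k : cos (pi / 2 + k%:R * pi : R) = 0 /\ sin (pi / 2 + k%:R * pi : R) = (-1) ^+ k.
Proof.
elim: k => [|k [c s]]; first by rewrite mul0r addr0 cos_pihalf sin_pihalf expr0.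
have -> : (k.+1%:R : R) * pi = k%:R * pi + pi by rewrite -natr1 mulrDl mul1r.
rewrite addrA cosDpi sinDpi c s oppr0 exprS.
by split=> //; rewrite mulN1r.
Qed.

Lemma tele (phi : R) (N : nat) :
  2 * sin phi * \sum_(i < N) cos (i%:R * (phi * 2)) = sin (N%:R * (phi * 2) - phi) + sin phi.
Proof.
elim: N => [|N IH]; first by rewrite big_ord0 mulr0 mul0r add0r sinN addNr.
rewrite big_ord_recr /= mulrDr IH.
set a := N%:R * (phi * 2).
have -> : N.+1%:R * (phi * 2) - phi = a + phi by rewrite /a -addn1 natrD; ring.
rewrite sinD sinD sinN cosN; ring.
Qed.

Definition gt (th : R) (x : nat) : R := if (x == 0)%N || (x == m) then 1 / 2 else cos (x%:R * th).

Lemma cos2x x : cos (x + x) = 2 * cos x ^+ 2 - 1 :> R.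
Proof. have h := sin2cos2 x; rewrite cosD -!expr2 h; ring. Qed.

Lemma gt_eig th : cos (m%:R * th) = 0 -> forall i, (i <= m)%N -> nb (gt th) i = (2 * cos th) * gt th i.
Proof.
move=> hc i hi.
have gE x : (0 < x)%N -> (x < m)%N -> gt th x = cos (x%:R * th).
  by move=> h1 h2; rewrite /gt; have -> : ((x == 0)%N || (x == m)) = false by lia.
have g0 : gt th 0 = 1 / 2 by rewrite /gt eqxx.
have gm : gt th m = 1 / 2 by rewrite /gt eqxx orbT.
have c1 : cos (1%:R * th) = cos th by rewrite mul1r.
case: (ltnP 0 i) => h0; last first.
  have -> : i = 0%N by lia.
  rewrite nb_zero g0 gE; [|done|lia].
  by rewrite c1; field.
case: (ltnP i m) => h1; last first.
  have -> : i = m by lia.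
  rewrite nb_m gm gE; [|done|lia].
  by rewrite c1; field.
case: (ltnP 1 i) => h2; last first.
  have -> : i = 1%N by lia.
  rewrite nb_one g0 gm !gE; try lia.
  have -> : (2%:R : R) * th = th + th by rewrite mulr_natl mulr2n.
  by rewrite cos2x c1; field.
case: (ltnP i.+1 m) => h3.
  rewrite nb_mid // !gE; try lia.
  set a := i%:R * th.
  have -> : i.-1%:R * th = a + - th.
    rewrite /a; have -> : i = (i.-1 + 1)%N by lia.
    rewrite natrD; have -> : (i.-1 + 1).-1 = i.-1 by lia.
    ring.
  have -> : i.+1%:R * th = a + th by rewrite /a -addn1 natrD; ring.
  rewrite !cosD cosN sinN; ring.
have -> : i = m.-1 by lia.
rewrite nb_end !gE; try lia.
set a := m.-1%:R * th.
have -> : m.-2%:R * th = a + - th.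
  rewrite /a; have -> : (m.-1%:R : R) = m.-2%:R + 1 by rewrite natr1; congr _%:R; lia.
  ring.
have : cos (a + th) = 0.
  rewrite -hc /a; congr cos; have -> : (m%:R : R) = m.-1%:R + 1 by rewrite natr1; congr _%:R; lia.
  ring.
rewrite !cosD cosN sinN => h; lra.
Qed.


Definition dd : R := pi / (m.*2)%:R.
Definition th (k : nat) : R := (k.*2.+1)%:R * dd.
Definition lam (k : nat) : R := 2 * cos (th k).

Lemma m2_gt0 : 0 < (m.*2)%:R :> R.
Proof. by rewrite ltr0n; lia. Qed.

Lemma dd_gt0 : 0 < dd.
Proof. by rewrite /dd divr_gt0 ?pi_gt0 ?m2_gt0. Qed.

Lemma pi_dd : pi = (m.*2)%:R * dd.
Proof. by rewrite /dd mulrC divfK // gt_eqF // m2_gt0. Qed.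

Lemma th_bounds k : (k < m)%N -> 0 < th k < pi.
Proof.
move=> hk; rewrite /th pi_dd; apply/andP; split.
  by rewrite mulr_gt0 ?dd_gt0 // ltr0n.
by rewrite ltr_pM2r ?dd_gt0 // ltr_nat; lia.
Qed.

Lemma th_in k : (k < m)%N -> th k \in `[0, pi].
Proof.
by move=> /th_bounds /andP[h1 h2]; rewrite in_itv /= (ltW h1) (ltW h2).
Qed.

Lemma m_th k : m%:R * th k = pi / 2 + k%:R * pi.
Proof.
rewrite /th /dd -!muln2 -addn1 !natrD !natrM; field.
by rewrite pnatr_eq0; lia.
Qed.

Lemma cos_mth k : cos (m%:R * th k) = 0.
Proof. by rewrite m_th; case: (trig_half k). Qed.

Lemma sin_mth k : sin (m%:R * th k) = (-1) ^+ k.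
Proof. by rewrite m_th; case: (trig_half k). Qed.

Lemma th_inj k k' : th k = th k' -> k = k'.
Proof.
rewrite /th => /(mulIf (lt0r_neq0 dd_gt0)) /eqP; rewrite eqr_nat => /eqP; lia.
Qed.

Lemma lam_inj k k' : (k < m)%N -> (k' < m)%N -> lam k = lam k' -> k = k'.
Proof.
have h2 : (2:R) != 0 by rewrite pnatr_eq0.
move=> hk hk' /eqP; rewrite /lam (inj_eq (mulfI h2)) => /eqP e.
by apply: th_inj; apply: cos_inj => //; apply: th_in.
Qed.

Lemma pihalf_dd : pi / 2 = m%:R * dd.
Proof. by rewrite pi_dd -muln2 natrM; field. Qed.

Lemma lam_zero k : (k < m)%N -> (lam k == 0) = (k.*2.+1 == m).
Proof.
move=> hk; apply/idP/idP.
  rewrite /lam mulf_eq0 pnatr_eq0 /= => /eqP hc.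
  have : th k = pi / 2.
    apply: cos_inj; rewrite ?th_in // ?cos_pihalf //.
    rewrite in_itv /= divr_ge0 ?pi_ge0 //= ler_pdivrMr // ler_peMr ?pi_ge0 //.
    by rewrite ler1n.
  rewrite pihalf_dd /th => /(mulIf (lt0r_neq0 dd_gt0)) /eqP.
  by rewrite eqr_nat.
move=> /eqP e; rewrite /lam.
have -> : th k = pi / 2 by rewrite pihalf_dd /th e.
by rewrite cos_pihalf mulr0.
Qed.

Lemma sum_gt th0 : \sum_(i < m.+1) vec (gt th0) i 0 = \sum_(i < m) cos (i%:R * th0).
Proof.
under eq_bigr do rewrite mxE.
rewrite -(big_mkord xpredT (fun i => gt th0 i)) -(big_mkord xpredT (fun i => cos (i%:R * th0))).
rewrite big_nat_recr //=.
have gm : gt th0 m = 1 / 2 by rewrite /gt eqxx orbT.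
have gmid : forall i, (i < m.-1)%N -> gt th0 i.+1 = cos (i.+1%:R * th0).
  by move=> i hi; rewrite /gt; have -> : ((i.+1 == 0)%N || (i.+1 == m)) = false by lia.
have [m' em] : exists m', m = m'.+1 by exists m.-1; lia.
rewrite gm em !big_nat_recl //.
rewrite (@eq_big_nat _ _ _ 0 m' _ (fun i => cos (i.+1%:R * th0))); last first.
  by move=> i hi; apply: gmid; rewrite em.
rewrite /gt /= mul0r cos0; by field.
Qed.


Lemma main_sum k : (k < m)%N -> (~~ odd k || (lam k != 0)) ->
  \sum_(i < m) cos (i%:R * th k) != 0.
Proof.
move=> hk h.
set phi := th k / 2.
have thphi : th k = phi * 2 by rewrite /phi; field.
have /andP [b1 b2] := th_bounds k hk.
have p1 : 0 < phi < pi / 2 by rewrite /phi; apply/andP; split; lra.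
have sp := sin_gt0_pihalf p1.
have cp : 0 < cos phi.
  by apply: cos_gt0_pihalf; case/andP: p1 => q1 q2; apply/andP; split; lra.
have T := tele phi m; rewrite -thphi sinB sin_mth cos_mth mul0r subr0 -signr_odd in T.
apply/negP => /eqP S0; rewrite S0 mulr0 in T.
move: h T; case: (odd k) => /= h T.
  have hs : sin phi = cos phi by rewrite expr1 in T; lra.
  move: h; rewrite /lam thphi.
  have -> : phi * 2 = phi + phi by rewrite mulrDr mulr1.
  rewrite cos2x; have := cos2Dsin2 phi; rewrite hs => e.
  have -> : 2 * cos phi ^+ 2 - 1 = 0 by lra.
  by rewrite mulr0 eqxx.
rewrite expr0 mul1r in T; lra.
Qed.


Lemma tail_sum l g : (forall i, (i <= m)%N -> nb g i = l * g i) -> g m.-1 = 0 -> g 0%N + g m = 0.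
Proof.
move=> Hg hz.
have e1 := Hg 1%N (ltnW (ltnW hm)); rewrite nb_one in e1.
have g1 : g 1%N = 0.
  have -> : 1%N = (m.-1 - m.-2)%N by lia.
  by rewrite (@rec_formula _ _ Hg) // hz mulr0.
have g2 : g 2%N = 0.
  have -> : 2%N = (m.-1 - (m - 3))%N by lia.
  by rewrite (@rec_formula _ _ Hg) ?hz ?mulr0 //; lia.
move: e1; rewrite g1 g2 mulr0 addr0 => e; exact: e.
Qed.

Definition Pk (k : nat) : bool := (k.*2.+1 != m) || ~~ odd k.

Lemma count_Pk : count Pk (iota 0 m) = if (4 %| m.+1)%N then m.-1 else m.
Proof.
have := count_predC Pk (iota 0 m); rewrite size_iota.
case: ifP => h4.
  have e : count (predC Pk) (iota 0 m) = 1%N.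
    rewrite (@eq_count _ _ (pred1 (m./2))); last by move=> k; rewrite /= /Pk; lia.
    by rewrite count_uniq_mem ?iota_uniq // mem_iota; lia.
  rewrite e; lia.
have e : count (predC Pk) (iota 0 m) = 0%N.
  rewrite (@eq_count _ _ pred0) ?count_pred0 // => k; rewrite /= /Pk; lia.
rewrite e; lia.
Qed.

Definition slist : seq R := map lam (filter Pk (iota 0 m)).

Lemma gt_nz th0 : vec (gt th0) != 0.
Proof.
apply/negP => /eqP /matrixP /(_ ord0 ord0); rewrite !mxE /gt /= => /eqP.
by rewrite mul1r invr_eq0 pnatr_eq0.
Qed.

Lemma lam_main k : (k < m)%N -> Pk k -> main_eigenvalue (Dn_adj R m.+1) (lam k).
Proof.
move=> hk hP; exists (vec (gt (th k))); split.
- exact: gt_nz.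
- apply/matrixP => i j; rewrite ord1 Aeq [RHS]mxE [vec _ i 0]mxE.
  by apply: gt_eig; [exact: cos_mth | rewrite -ltnS].
- rewrite sum_gt; apply: main_sum => //.
  move: hP; rewrite /Pk orbC; case: (odd k) => //= h.
  by rewrite lam_zero.
Qed.

Lemma lam_root k : (k < m)%N -> Q.[lam k] = 0.
Proof.
move=> hk; apply: (@Q_root _ (gt (th k))).
  by apply: gt_eig; exact: cos_mth.
apply/negP => /eqP h0.
have := @tail_sum _ _ (@gt_eig (th k) (cos_mth k)) h0.
rewrite /gt !eqxx /= orbT; lra.
Qed.

Theorem main_m : exists s : seq R,
    [/\ uniq s,
        (forall l : R, l \in s <-> main_eigenvalue (Dn_adj R m.+1) l)
      & size s = (if (4 %| m.+1)%N then (m.+1 - 2)%N else (m.+1 - 1)%N)].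
Proof.
exists slist; split.
- rewrite /slist map_inj_in_uniq ?filter_uniq ?iota_uniq //.
  move=> k k'; rewrite !mem_filter !mem_iota => /andP[_ hk] /andP[_ hk'].
  by apply: lam_inj; lia.
- move=> l; split.
    by case/mapP => k; rewrite mem_filter mem_iota => /andP[hP hk] ->; apply: lam_main => //; lia.
  case=> v [vnz hv hs].
  have [l0|lnz] := eqVneq l 0.
    case: (eqVneq (m %% 4) 1)%N => h4; last first.
      by move: hs; rewrite zero_not_main ?eqxx // hv l0 scale0r.
    have hk : (m./2 < m)%N by lia.
    have -> : l = lam m./2 by rewrite l0; apply/esym/eqP; rewrite lam_zero //; lia.
    apply/mapP; exists m./2 => //; rewrite mem_filter mem_iota /Pk; apply/andP; split; lia.
  have Hg := @eig_nb v l hv.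
  have gnz : gof v m.-1 != 0.
    apply/negP => /eqP h0; move: vnz; rewrite -(vec_gof v).
    have z := @zero_tail _ _ Hg h0 lnz.
    suff -> : vec (gof v) = 0 by rewrite eqxx.
    by apply/matrixP => i j; rewrite !mxE z // -ltnS.
  have Ql := @Q_root _ _ Hg gnz.
  have : l \in map lam (iota 0 m).
    apply/negPn/negP => hn.
    have := @max_poly_roots _ Q (l :: map lam (iota 0 m)) Q_neq0.
    rewrite size_Q /= size_map size_iota ltnn => H; suff : false by []; apply: H.
      rewrite /root Ql eqxx /=; apply/allP => x /mapP [k]; rewrite mem_iota => hk ->.
      by rewrite /root lam_root ?eqxx //; lia.
    rewrite hn map_inj_in_uniq ?iota_uniq // => k k'; rewrite !mem_iota => hk hk'.
    by apply: lam_inj; lia.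
  case/mapP => k; rewrite mem_iota => hk el.
  apply/mapP; exists k => //; rewrite mem_filter mem_iota /Pk.
  have : k.*2.+1 != m.
    by apply/negP => /eqP e; move: lnz; rewrite el; move/eqP: e; rewrite -lam_zero; [move=> /eqP -> ; rewrite eqxx | lia].
  by move=> ->; apply/andP; split => //; lia.
- rewrite size_map size_filter count_Pk; case: ifP => _; lia.
Qed.

End Adj.

Theorem corollary1p4 (R : realType) (n : nat) : (4 <= n)%N ->
  exists s : seq R,
    [/\ uniq s,
        (forall l : R, l \in s <-> main_eigenvalue (Dn_adj R n) l)
      & size s = (if (4 %| n)%N then (n - 2)%N else (n - 1)%N)].
Proof.
case: n => [|m] // hm.
exact: (@main_m R m hm).
Qed.
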